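(* Let $k,d$ be positive integers with $d\equiv0\pmod k$. There exists $n_0=n_0(d,k)$ such that for every $n\ge n_0$, $p(n,k,d)=\binom{n}{\le d/k}$. Moreover, for such $n$ the only $k$-wise $(n-d)$-union family $\mathcal{F}\subset2^{[n]}$ of size $\binom{n}{\le d/k}$ is $\binom{[n]}{\le d/k}$.
   Context: $[n]=\{1,\dots,n\}$. $\binom{[n]}{\le t}=\{S\subset[n]:|S|\le t\}$ and $\binom{n}{\le t}$ is its size. A family $\mathcal{F}\subset2^{[n]}$ is $k$-wise $(n-d)$-union if $|S_1\cup\cdots\cup S_k|\le d$ for all (not necessarily distinct) $S_1,\dots,S_k\in\mathcal{F}$. $p(n,k,d)$ is the maximum size of a $k$-wise $(n-d)$-union family $\mathcal{F}\subset2^{[n]}$. *)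

(* Defs.v *)
From mathcomp Require Import all_boot.
Set Implicit Arguments. Unset Strict Implicit. Unset Printing Implicit Defensive.

(* A family F of subsets of [n] (modelled as 'I_n) is k-wise (n-d)-union if
   |S_1 u ... u S_k| <= d for all (not necessarily distinct) S_1..S_k in F. *)
Definition kwise_union (n k d : nat) (F : {set {set 'I_n}}) : bool :=
  [forall f : {ffun 'I_k -> {set 'I_n}},
     [forall i, f i \in F] ==> (#|\bigcup_(i < k) f i| <= d)].

Definition p (n k d : nat) : nat :=
  \max_(F : {set {set 'I_n}} | kwise_union k d F) #|F|.

Definition binom_le_set (n t : nat) : {set {set 'I_n}} := [set S : {set 'I_n} | #|S| <= t].
Definition binom_le (n t : nat) : nat := \sum_(0 <= i < t.+1) 'C(n, i).

(* Main.v *)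
Require Import Defs.
From mathcomp Require Import all_boot zify.

Lemma card_bigcup_ord (T : finType) m (f : 'I_m -> {set T}) :
  #|\bigcup_(i < m) f i| <= \sum_(i < m) #|f i|.
Proof.
elim: m f => [|m IH] f; first by rewrite big_ord0 cards0.
rewrite big_ord_recr big_ord_recr /=.
apply: leq_trans (leq_card_setU _ _) _.
by rewrite leq_add2r.
Qed.

Arguments card_bigcup_ord {T m} f.

Lemma card_binom_le_set n s : #|binom_le_set n s| = binom_le n s.
Proof.
elim: s => [|s IH].
  rewrite /binom_le big_nat1 bin0.
  have -> : binom_le_set n 0 = [set set0].
    by apply/setP => X; rewrite !inE leqn0 cards_eq0.
  by rewrite cards1.
rewrite /binom_le big_nat_recr //= -/(binom_le n s) -IH.
have -> : binom_le_set n s.+1 = binom_le_set n s :|: [set A : {set 'I_n} | #|A| == s.+1].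
  by apply/setP => X; rewrite !inE leq_eqVlt ltnS orbC.
rewrite cardsU card_draws card_ord.
have -> : binom_le_set n s :&: [set A : {set 'I_n} | #|A| == s.+1] = set0.
  apply/setP => X; rewrite !inE; apply/negbTE/negP => /andP[h /eqP e].
  by rewrite e ltnn in h.
by rewrite cards0 subn0.
Qed.

Lemma kwise_small n k d (F : {set {set 'I_n}}) m (g : {ffun 'I_m.+1 -> {set 'I_n}}) :
  kwise_union k d F -> m < k -> (forall i, g i \in F) ->
  #|\bigcup_(i < m.+1) g i| <= d.
Proof.
move=> /forallP kw mk gF.
pose h := [ffun i : 'I_k => g (inord i)].
have := kw h; rewrite (_ : [forall i, h i \in F] = true); last first.
  by apply/forallP => i; rewrite ffunE gF.
move=> /= hd; apply: leq_trans hd; apply: subset_leq_card.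
apply/bigcupsP => i _.
have ik : i < k by apply: leq_trans (ltn_ord i) mk.
rewrite (_ : g i = h (Ordinal ik)); first by apply: (bigcup_sup (Ordinal ik)).
by rewrite ffunE /=; congr (g _); apply: val_inj; rewrite /= inordK.
Qed.

Arguments kwise_small {n k d F m} g.

Lemma binom_ineq n t c : 0 < t -> t + t * (c * t) <= n ->
  c * binom_le n t.-1 < binom_le n t.
Proof.
case: t => [//|t] _ hn /=.
have step : forall i, i <= t -> 'C(n, i) * (c * t.+1) <= 'C(n, i.+1).
  move=> i it.
  have h1 : t.+1 * (c * t.+1) <= n - i.
    rewrite leq_subRL; last by apply: leq_trans hn; apply: leq_trans (leq_addr _ _); apply: leqW.
    apply: leq_trans hn; rewrite leq_add2r; by apply: leqW.
  have e := mul_bin_left n i.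
  rewrite -(leq_pmul2l (ltn0Sn t)).
  apply: leq_trans (_ : (n - i) * 'C(n,i) <= _); last first.
    by rewrite -e leq_mul2r ltnS it orbT.
  by rewrite mulnCA [(n - i) * _]mulnC leq_mul2l h1 orbT.
have Spos : 0 < binom_le n t.
  rewrite /binom_le big_nat_recl // bin0; by [].
case: (posnP c) => [-> | cpos]; first by rewrite mul0n /binom_le big_nat_recr //= addn_gt0 -/(binom_le n t) Spos.
have mono : forall m, m <= t.+1 -> 'C(n, t.+1 - m) <= 'C(n, t.+1).
  elim=> [|m IH] hm; first by rewrite subn0.
  apply: leq_trans (IH (ltnW hm)).
  have hm' : m <= t by [].
  have := step (t - m) (leq_subr _ _).
  rewrite -subSn // subSS => h.
  apply: leq_trans h; rewrite -{1}(muln1 'C(n, _)) leq_mul2l muln_gt0 cpos /= orbT //.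
have key : c * binom_le n t * t.+1 <= t.+1 * 'C(n, t.+1).
  rewrite -mulnA /binom_le big_distrl /= big_mkord.
  apply: leq_trans (_ : \sum_(i < t.+1) 'C(n, t.+1) <= _); last by rewrite sum_nat_const card_ord.
  rewrite big_distrr /=. apply: leq_sum => i _.
  have it : i <= t by rewrite -ltnS ltn_ord.
  rewrite mulnA [c * _]mulnC -mulnA.
  apply: leq_trans (step i it) _.
  have := mono (t - i) (leq_trans (leq_subr _ _) (leqnSn _)).
  by rewrite subSn ?leq_subr // subKn.
have key2 : c * binom_le n t <= 'C(n, t.+1).
  by rewrite -(leq_pmul2r (ltn0Sn t)) [X in _ <= X]mulnC.
have -> : binom_le n t.+1 = binom_le n t + 'C(n, t.+1) by rewrite /binom_le big_nat_recr.
apply: leq_ltn_trans key2 _.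
by rewrite -{1}(add0n 'C(n, _)) ltn_add2r.
Qed.

Lemma count_GU n (U : {set 'I_n}) s (F : {set {set 'I_n}}) :
  (forall B, B \in F -> #|B :\: U| <= s) -> #|F| <= 2 ^ #|U| * binom_le n s.
Proof.
move=> hF.
rewrite -card_powerset -card_binom_le_set -cardsX.
apply: leq_trans (leq_imset_card (fun p => p.1 :|: p.2) _).
apply: subset_leq_card; apply/subsetP => B BF.
apply/imsetP; exists (B :&: U, B :\: U); last by rewrite /= setID.
by rewrite !inE /= subsetIr hF.
Qed.

Lemma struct_lemma n k t (F : {set {set 'I_n}}) (A : {set 'I_n}) :
  0 < k -> kwise_union k (t * k) F -> A \in F -> t < #|A| ->
  exists U : {set 'I_n}, #|U| <= t * k /\ forall B, B \in F -> #|B :\: U| < t.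
Proof.
move=> kpos kw AF tA.
pose P := fun j => (j < k) && [exists f : {ffun 'I_j -> {set 'I_n}},
   [forall i, f i \in F] && (j * t < #|\bigcup_(i < j) f i|)].
have exP : exists j, P j.
  exists 1; apply/andP; split; last first.
    apply/existsP; exists [ffun _ => A]; rewrite big_ord1 ffunE mul1n tA andbT.
    by apply/forallP => i; rewrite ffunE.
  have := @kwise_small n k (t*k) F 0 [ffun _ => A] kw kpos.
  rewrite big_ord1 ffunE => h.
  have {h} h := h (fun i => ltac:(by rewrite ffunE)).
  rewrite ltn_neqAle kpos andbT; apply/eqP => k1.
  by rewrite -k1 muln1 leqNgt tA in h.
have ubP : forall i, P i -> i <= k by move=> i /andP[/ltnW].
case: (ex_maxnP exP ubP) => j /andP[jk /existsP[f /andP[/forallP fF hf]]] jmax.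
case: j jk f fF hf jmax => [|j] jk f fF hf jmax; first by rewrite big_ord0 cards0 in hf.
exists (\bigcup_(i < j.+1) f i); split.
  by apply: kwise_small f kw (ltnW jk) fF.
move=> B BF.
pose g : {ffun 'I_j.+2 -> {set 'I_n}} := [ffun i => if unlift ord0 i is Some i' then f i' else B].
have gU : \bigcup_(i < j.+2) g i = B :|: \bigcup_(i < j.+1) f i.
  rewrite big_ord_recl ffunE unlift_none; congr (_ :|: _).
  by apply: eq_bigr => i _; rewrite ffunE liftK.
have gF : forall i, g i \in F.
  by move=> i; rewrite ffunE; case: (unlift ord0 i).
have hBU : #|B :|: \bigcup_(i < j.+1) f i| <= j.+2 * t.
  rewrite -gU; case: (ltngtP j.+2 k) => hk.
  - rewrite leqNgt; apply/negP => hc.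
    have : P j.+2.
      apply/andP; split => //; apply/existsP; exists g; rewrite hc andbT.
      by apply/forallP.
    by move/jmax; rewrite ltnn.
  - by rewrite ltnNge jk in hk.
  - apply: leq_trans (kwise_small g kw _ gF) _; first by rewrite -hk.
    by rewrite -hk mulnC.
set U := \bigcup_(i < j.+1) f i in hf hBU *.
have h1 := cardsU B U; have h2 := cardsD B U.
have h3 : #|B :&: U| <= #|B| by apply: subset_leq_card; apply: subsetIl.
have h4 : #|B :&: U| <= #|U| by apply: subset_leq_card; apply: subsetIr.
move: hBU hf; rewrite mulSn.
set x := j.+1 * t. move=> hBU hf.
rewrite h2. rewrite h1 in hBU. lia.
Qed.

Arguments struct_lemma {n k t F A}.
Arguments binom_ineq {n t c}.

Lemma binom_set_kwise n k t : kwise_union k (t * k) (binom_le_set n t).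
Proof.
apply/forallP => f; apply/implyP => /forallP hf.
apply: leq_trans (card_bigcup_ord (fun i => f i)) _.
apply: leq_trans (_ : \sum_(i < k) t <= _); last by rewrite sum_nat_const card_ord mulnC.
by apply: leq_sum => i _; have := hf i; rewrite inE.
Qed.

Theorem proposition9 (k d : nat) (hk : 0 < k) (hd : 0 < d) (hkd : k %| d) :
  exists n0 : nat, forall n : nat, n0 <= n ->
    p n k d = binom_le n (d %/ k) /\
    (forall F : {set {set 'I_n}},
       kwise_union k d F -> #|F| = binom_le n (d %/ k) ->
       F = binom_le_set n (d %/ k)).
Proof.
set t := d %/ k.
have dkt : d = t * k by rewrite divnK.
have tpos : 0 < t by move: hd; rewrite dkt muln_gt0 => /andP[].
exists (t + t * (2 ^ d * t)) => n hn.
have bound : forall F : {set {set 'I_n}}, kwise_union k d F ->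
    #|F| <= binom_le n t /\ (#|F| = binom_le n t -> F = binom_le_set n t).
  move=> F kw.
  case: (boolP [exists A in F, t < #|A|]) => [/existsP[A /andP[AF tA]] | hno].
    rewrite dkt in kw.
    have [U [hU hB]] := struct_lemma hk kw AF tA.
    have hc : #|F| < binom_le n t.
      apply: leq_ltn_trans (binom_ineq tpos hn).
      apply: leq_trans (@count_GU n U t.-1 F _) _.
        by move=> B BF; rewrite -ltnS prednK // hB.
      by rewrite leq_mul2r leq_pexp2l // ?orbT // dkt.
    split; first by apply: ltnW.
    by move=> e; rewrite e ltnn in hc.
  have sub : F \subset binom_le_set n t.
    apply/subsetP => A AF; rewrite inE leqNgt; apply/negP => tA.
    by move/existsP: hno; apply; exists A; rewrite AF.
  split; first by rewrite -card_binom_le_set; apply: subset_leq_card.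
  move=> e; apply/eqP; rewrite eqEcard sub card_binom_le_set e leqnn //.
split; last by move=> F kw e; apply: (bound F kw).2.
apply/eqP; rewrite eqn_leq; apply/andP; split.
  by apply/bigmax_leqP => F kw; apply: (bound F kw).1.
rewrite -card_binom_le_set; apply: leq_bigmax_cond.
by rewrite dkt; apply: binom_set_kwise.
Qed.
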